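(* Let $(g,f)$ be a Riordan matrix with $g(t)=\sum_{j\ge0}g_jt^j$, $g_0=1$, and $f(t)=\sum_{j\ge1}f_jt^j$, $f_1\neq0$. Then $(g,f)\in R_{1,1,1}$ if and only if $f_1=1$, $f_2=g_1$ and $g_2=g_1^2$; equivalently, $f_1=1$, $f_2=g_1$ and $g_2=f_2^2$.
   Context: Let $K$ be $\mathbb{R}$ or $\mathbb{C}$. A (proper) Riordan matrix is a pair $(g,f)$ of formal power series in $K[[t]]$ with $g(0)=1$, $f(0)=0$, $f'(0)\neq 0$. The $A$-sequence $(a_j)$ of $(g,f)$ is the unique sequence whose generating function $A(t)$ satisfies $f(t)=tA(f(t))$; the $Z$-sequence $(z_j)$ is the unique sequence whose generating function $Z(t)$ satisfies $g(t)=1/(1-tZ(f(t)))$. $R_{1,1,1}$ denotes the set of Riordan matrices with $a_0=1$, $z_0=a_1$ and $z_1=0$. *)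

(* Defs.v *)
(* Formal power series in K[[t]] are represented by their
   coefficient sequences nat -> K. *)
From mathcomp Require Import all_boot all_order all_algebra.
Set Implicit Arguments. Unset Strict Implicit. Unset Printing Implicit Defensive.
Import Order.TTheory GRing.Theory Num.Theory.
Local Open Scope ring_scope.

Definition fps (K : numFieldType) := nat -> K.

Definition fps_one (K : numFieldType) : fps K := fun n => if n is 0%N then 1 else 0.

Definition fps_mul (K : numFieldType) (p q : fps K) : fps K :=
  fun n => \sum_(i < n.+1) p i * q (n - i)%N.

Definition fps_tmul (K : numFieldType) (p : fps K) : fps K :=
  fun n => if n is m.+1 then p m else 0.

Definition fps_sub (K : numFieldType) (p q : fps K) : fps K := fun n => p n - q n.

Fixpoint fps_pow (K : numFieldType) (p : fps K) (k : nat) : fps K :=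
  if k is k'.+1 then fps_mul p (fps_pow p k') else fps_one K.

(* composition a(f(t)), meaningful when f(0) = 0 (the only case used) *)
Definition fps_comp (K : numFieldType) (a f : fps K) : fps K :=
  fun n => \sum_(k < n.+1) a k * fps_pow f k n.

Definition riordan (K : numFieldType) (g f : fps K) : Prop :=
  g 0%N = 1 /\ f 0%N = 0 /\ f 1%N != 0.

(* a is the A-sequence of (g,f):  f(t) = t A(f(t)) *)
Definition is_Aseq (K : numFieldType) (f a : fps K) : Prop :=
  f = fps_tmul (fps_comp a f).

(* z is the Z-sequence of (g,f):  g(t) = 1/(1 - t Z(f(t))),
   written without division as  g(t) (1 - t Z(f(t))) = 1 *)
Definition is_Zseq (K : numFieldType) (g f z : fps K) : Prop :=
  fps_mul g (fps_sub (fps_one K) (fps_tmul (fps_comp z f))) = fps_one K.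

Definition R111 (K : numFieldType) (g f : fps K) : Prop :=
  riordan g f /\
  exists a z : fps K, [/\ is_Aseq f a, is_Zseq g f z,
                          a 0%N = 1, z 0%N = a 1%N & z 1%N = 0].

(* Main.v *)
Require Import Defs.
From mathcomp Require Import all_boot all_order all_algebra.
From Stdlib Require Import FunctionalExtensionality.
From mathcomp Require Import zify ring.
Set Implicit Arguments. Unset Strict Implicit. Unset Printing Implicit Defensive.
Import Order.TTheory GRing.Theory Num.Theory.
Local Open Scope ring_scope.

Fixpoint appr (K : numFieldType) (D : nat -> nat -> K) (c : nat -> K) (n : nat) : nat -> K :=
  match n with
  | 0%N => fun _ => c 0%N / D 0%N 0%N
  | n'.+1 => let p := appr D c n' in
     fun k => if (k <= n')%N then p k
              else (c n'.+1 - \sum_(j < n'.+1) p j * D j n'.+1) / D n'.+1 n'.+1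
  end.

Lemma appr_stab (K : numFieldType) (D : nat -> nat -> K) c n k :
  (k <= n)%N -> appr D c n k = appr D c k k.
Proof.
elim: n => [|n IH] Hk.
  by move: Hk; rewrite leqn0 => /eqP ->.
case: (eqVneq k n.+1) => [->//|Hne].
have Hkn : (k <= n)%N by rewrite -ltnS ltn_neqAle Hne Hk.
by rewrite /= Hkn IH.
Qed.

Lemma tri_solve (K : numFieldType) (D : nat -> nat -> K) (c : nat -> K) :
  (forall n, D n n != 0) ->
  exists x : nat -> K, forall n, \sum_(k < n.+1) x k * D k n = c n.
Proof.
move=> HD; exists (fun k => appr D c k k) => n.
case: n => [|m].
  by rewrite big_ord_recr big_ord0 /= add0r mulfVK.
rewrite big_ord_recr /= ltnn.
have -> : \sum_(i < m.+1) appr D c i i * D i m.+1 =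
          \sum_(j < m.+1) appr D c m j * D j m.+1.
  by apply: eq_bigr => i _; rewrite (appr_stab D c (ltnSE (ltn_ord i))).
by rewrite mulfVK // addrC subrK.
Qed.

Lemma pow_low (K : numFieldType) (f : fps K) k m :
  f 0%N = 0 -> (m < k)%N -> fps_pow f k m = 0.
Proof.
move=> f0; elim: k m => [//|k IH] m Hm /=.
rewrite /fps_mul big1 // => [[i Hi]] _ /=.
case: i Hi => [|i] Hi; first by rewrite f0 mul0r.
rewrite IH ?mulr0 //; lia.
Qed.

Lemma pow_diag (K : numFieldType) (f : fps K) n :
  f 0%N = 0 -> fps_pow f n n = f 1%N ^+ n.
Proof.
move=> f0; elim: n => [//|n IH] /=.
rewrite /fps_mul big_ord_recl big_ord_recl /= f0 mul0r add0r subn1 /= IH exprS.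
rewrite big1 ?addr0 // => i _.
rewrite pow_low ?mulr0 //; case: i => i Hi /=; rewrite /bump /=; lia.
Qed.

Lemma aseq_low (K : numFieldType) (f a : fps K) :
  f 0%N = 0 -> is_Aseq f a -> f 1%N = a 0%N /\ f 2%N = a 1%N * f 1%N.
Proof.
move=> f0 H.
have e1 := congr1 (fun p => p 1%N) H; have e2 := congr1 (fun p => p 2%N) H.
rewrite /= /fps_comp !big_ord_recr !big_ord0 /= in e1 e2.
have p11 := pow_diag 1 f0.
move: p11 e1 e2; rewrite /= /fps_one /= => p11 e1 e2.
split; first by rewrite e1 add0r mulr1.
by rewrite e2 p11 expr1 mulr0 !add0r.
Qed.

Lemma zseq_low (K : numFieldType) (g f z : fps K) :
  g 0%N = 1 -> f 0%N = 0 -> is_Zseq g f z ->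
  z 0%N = g 1%N /\ g 2%N = g 1%N * z 0%N + z 1%N * f 1%N.
Proof.
move=> g0 f0 H.
have e1 := congr1 (fun p => p 1%N) H; have e2 := congr1 (fun p => p 2%N) H.
have p11 : fps_pow f 1 1 = f 1%N by rewrite pow_diag // expr1.
rewrite /fps_mul /fps_sub /fps_tmul /fps_comp in e1 e2.
rewrite /= !big_ord_recr !big_ord0 /= in e1 e2.
rewrite !big_ord_recr !big_ord0 /= in e1 e2.
change (fps_mul f (fps_one K) 1%N) with (fps_pow f 1 1) in e2.
rewrite p11 g0 in e2; rewrite g0 in e1.
split.
  rewrite -[z 0%N]addr0 -e1 !(add0r, mul1r, mulr1, subr0, sub0r, mulr0).
  by rewrite addNKr.
by rewrite -[RHS]addr0 -e2; ring.
Qed.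

Lemma mul_rev (K : numFieldType) (g h : fps K) n :
  fps_mul g h n = \sum_(k < n.+1) h k * g (n - k)%N.
Proof.
rewrite /fps_mul (reindex_inj rev_ord_inj).
apply: eq_bigr => i _.
have -> : nat_of_ord (rev_ord i) = (n - i)%N by rewrite /= subSS.
by rewrite subKn 1?mulrC // -ltnS.
Qed.

Theorem corollary4p5 (K : numFieldType) (g f : fps K) :
  riordan g f ->
  (R111 g f <-> [/\ f 1%N = 1, f 2%N = g 1%N & g 2%N = g 1%N ^+ 2]) /\
  (R111 g f <-> [/\ f 1%N = 1, f 2%N = g 1%N & g 2%N = f 2%N ^+ 2]).
Proof.
move=> Hr; have [g0 [f0 f1]] := Hr.
have Dne : forall n, fps_pow f n n != 0 by move=> n; rewrite pow_diag // expf_neq0.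
have [a Ha] := tri_solve (fun n => f n.+1) Dne.
have HA : is_Aseq f a.
  apply: functional_extensionality => -[|n] //=.
  by rewrite /fps_comp Ha.
have Gne : forall n, (fun k n => g (n - k)%N) n n != 0.
  by move=> n; rewrite /= subnn g0 oner_neq0.
have [h Hh] := @tri_solve K (fun k n => g (n - k)%N) (fps_one K) Gne.
have [z Hz] := tri_solve (fun n => - h n.+1) Dne.
have HZ : is_Zseq g f z.
  rewrite /is_Zseq.
  have -> : fps_sub (fps_one K) (fps_tmul (fps_comp z f)) = h.
    apply: functional_extensionality => -[|n] /=.
      by have := Hh 0%N; rewrite big_ord_recr big_ord0 /= g0 add0r mulr1 /fps_sub => ->; rewrite subr0.
    by rewrite /fps_sub /fps_comp /fps_tmul /= Hz sub0r opprK.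
  by apply: functional_extensionality => n; rewrite mul_rev Hh.
have key : R111 g f <-> [/\ f 1%N = 1, f 2%N = g 1%N & g 2%N = g 1%N ^+ 2].
  split.
    move=> [_ [a' [z' [Ha' Hz' a0 z0 z1]]]].
    have [e1 e2] := aseq_low f0 Ha'.
    have [e3 e4] := zseq_low g0 f0 Hz'.
    have F1 : f 1%N = 1 by rewrite e1.
    split => //.
      by rewrite e2 F1 mulr1 -z0 e3.
    by rewrite e4 z1 mul0r addr0 e3 expr2.
  move=> [F1 F2 G2]; split => //; exists a, z.
  have [e1 e2] := aseq_low f0 HA.
  have [e3 e4] := zseq_low g0 f0 HZ.
  have a1 : a 1%N = g 1%N by rewrite -F2 e2 F1 mulr1.
  split => //; first by rewrite -e1.
    by rewrite a1.
  move: e4; rewrite G2 e3 F1 mulr1 expr2 => /eqP.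
  by move=> /eqP e; apply: (@addrI _ (g 1%N * g 1%N)); rewrite addr0; exact: esym e.
split => //; rewrite key.
split => -[F1 F2 G2]; split => //; by rewrite G2 F2.
Qed.
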